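(* Let $g(v;a)=v(1-v)(v-a)$, $k>0$, $a\in(0,1)$, $v_i=\frac{a+1}{3}$, and $A\in(v_i,1)$. Put $u_{tp}=\frac12(1+a-A)$. Then $u_{tp}\in(\frac a2,v_i)$, $$d^\diamond(A;a)=\frac{-3A^2+2(a+1)A+(a-1)^2}{4(k+1)}>0,$$ and the line $v\mapsto d^\diamond(A;a)(k+1)(A-v)-g(A;a)$ touches the graph of $v\mapsto -g(v;a)$ tangentially at $v=u_{tp}$ (equal values and equal derivatives there).
   Context: $d^\diamond(A;a)=\inf\{d>0:\ d(k+1)(A-v)-g(A;a)\ge -g(v;a)\ \text{for all }v\in[0,A]\}$. *)

(* Defs.v *)
From mathcomp Require Import all_boot all_order all_algebra.
From mathcomp Require Import all_classical all_reals all_analysis.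
Set Implicit Arguments. Unset Strict Implicit. Unset Printing Implicit Defensive.
Import Order.TTheory GRing.Theory Num.Theory.
Local Open Scope classical_set_scope.
Local Open Scope ring_scope.

Definition g {R : realType} (v a : R) : R := v * (1 - v) * (v - a).

Definition d_diamond {R : realType} (k A a : R) : R :=
  inf [set d : R | 0 < d /\
        forall v : R, 0 <= v <= A -> - g v a <= d * (k + 1) * (A - v) - g A a].

(* Main.v *)
Require Import Defs.
From mathcomp Require Import all_boot all_order all_algebra.
From mathcomp Require Import all_classical all_reals all_analysis.
From mathcomp Require Import ring lra.
Import Order.TTheory GRing.Theory Num.Theory.
Local Open Scope classical_set_scope.
Local Open Scope ring_scope.

Lemma scR (R : realType) (x y : R) : x *: y = x * y. Proof. by []. Qed.

Theorem lemma7p1 (R : realType) (k a A : R) :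
  0 < k -> 0 < a < 1 -> (a + 1) / 3 < A < 1 ->
  let vi := (a + 1) / 3 in
  let utp := (1 + a - A) / 2 in
  let dd := d_diamond k A a in
  [/\ a / 2 < utp < vi,
      dd = (- 3 * A ^+ 2 + 2 * (a + 1) * A + (a - 1) ^+ 2) / (4 * (k + 1)),
      0 < dd,
      dd * (k + 1) * (A - utp) - g A a = - g utp a
    & derive1 (fun v : R => dd * (k + 1) * (A - v) - g A a) utp
        = derive1 (fun v : R => - g v a) utp].
Proof.
move=> k0 /andP[a0 a1] /andP[Ai A1] vi utp dd.
set c := (- 3 * A ^+ 2 + 2 * (a + 1) * A + (a - 1) ^+ 2) / (4 * (k + 1)).
set h := (- 3 * A ^+ 2 + 2 * (a + 1) * A + (a - 1) ^+ 2) / 4.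
have k1 : 0 < k + 1 by lra.
have hc : c * (k + 1) = h by rewrite /c /h; field; lra.
have Ai' : a + 1 < 3 * A by move: Ai; rewrite ltr_pdivrMr //; lra.
have hpos : 0 < h.
  rewrite /h; nra.
have cpos : 0 < c.
  by rewrite /c divr_gt0 //; [rewrite /h in hpos; lra | lra].
have utpA : utp < A by rewrite /utp; lra.
set S := [set d : R | 0 < d /\
        forall v : R, 0 <= v <= A -> - g v a <= d * (k + 1) * (A - v) - g A a].
have cS : S c.
  split => // v /andP[v0 vA]; rewrite hc /h /g.
  have : 0 <= (A - v) * (v - utp) ^+ 2 by apply: mulr_ge0; [lra| exact: sqr_ge0].
  rewrite /utp; nra.
have lb : lbound S c.
  move=> d [d0 /(_ utp)]; rewrite /g.
  have -> : 0 <= utp <= A by apply/andP; split; rewrite /utp; lra.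
  move=> /(_ isT) H.
  have : h <= d * (k + 1).
    have : 0 <= (d * (k + 1) - h) * (A - utp).
      move: H; rewrite /h /utp; nra.
    rewrite pmulr_lge0; lra.
  by rewrite -hc ler_pM2r.
have ddc : dd = c.
  apply/eqP; rewrite eq_le; apply/andP; split.
    by apply: ge_inf => //; exists c.
  by apply: lb_le_inf => //; exists c.
have val : c * (k + 1) * (A - utp) - g A a = - g utp a.
  by rewrite hc /h /g /utp; field.
have ddc' : d_diamond k A a = c :> R by exact: ddc.
rewrite /dd ddc'; split => //.
  by apply/andP; split; rewrite /utp /vi; lra.
rewrite !derive1E.
have -> : (fun v : R => c * (k + 1) * (A - v) - g A a) =
   cst (c * (k + 1) * A - g A a) - (c * (k + 1)) \*: (@id R).
  by apply/funext => v /=; rewrite !fctE /= !scR; ring.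
have -> : (fun v : R => - g v a) =
   (@id R) ^+ 3 - (1 + a) \*: (@id R) ^+ 2 + a \*: (@id R).
  by apply/funext => v /=; rewrite !fctE /= /g !scR; ring.
by rewrite !derive_val !scR !mulr1 hc /h /utp /=; field.
Qed.
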